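(* Let $\omega\ge2$ and let $\Gamma$ be an $\omega$-clique regular finite simple graph with vertices $v_1,\dots,v_n$, adjacency matrix $A$ and degree matrix $D=\mathrm{diag}(d(v_1),\dots,d(v_n))$, and with cliques of order $\omega$ listed $c_1,\dots,c_m$. Let $A_C$ be the adjacency matrix of $C_\omega(\Gamma)$ in this order, and let $R$ be the $n\times m$ matrix with $R_{ij}=1$ if $v_i\in c_j$ and $R_{ij}=0$ otherwise. Then (1) $R^TR=A_C+\omega I_m$, and (2) $RR^T=A+\frac{1}{\omega-1}D$.
   Context: A graph is $\omega$-clique regular if it has a nonempty edge set and every edge lies in exactly one clique of order $\omega$. $C_\omega(\Gamma)$ has as vertices the cliques of order $\omega$ of $\Gamma$, two distinct ones adjacent iff they have nonempty intersection. *)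

(* Defs.v *)
From HB Require Import structures.
From mathcomp Require Import all_boot all_order all_algebra.
Set Implicit Arguments. Unset Strict Implicit. Unset Printing Implicit Defensive.
Import GRing.Theory Num.Theory.
Local Open Scope ring_scope.

Definition simple_graph (T : finType) (e : rel T) : Prop :=
  symmetric e /\ irreflexive e.

Definition is_clique (T : finType) (e : rel T) (c : {set T}) : bool :=
  [forall x in c, forall y in c, (x != y) ==> e x y].

Definition omega_clique (T : finType) (e : rel T) (w : nat) (c : {set T}) : bool :=
  is_clique e c && (#|c| == w)%N.

Definition clique_regular (T : finType) (e : rel T) (w : nat) : Prop :=
  (exists x y, e x y) /\
  forall x y, e x y ->
    #|[set c : {set T} | omega_clique e w c && (x \in c) && (y \in c)]| = 1%N.

Definition adj_mx (R : nzRingType) (n : nat) (e : rel 'I_n) : 'M[R]_n :=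
  \matrix_(i, j) (e i j)%:R.

Definition degree (T : finType) (e : rel T) (x : T) : nat := #|[set y | e x y]|.

Definition deg_mx (R : nzRingType) (n : nat) (e : rel 'I_n) : 'M[R]_n :=
  diag_mx (\row_i (degree e i)%:R).

Definition clique_graph_adj_mx (R : nzRingType) (n m : nat)
  (c : 'I_m -> {set 'I_n}) : 'M[R]_m :=
  \matrix_(j, k) ((j != k) && (c j :&: c k != set0))%:R.

Definition incidence_mx (R : nzRingType) (n m : nat)
  (c : 'I_m -> {set 'I_n}) : 'M[R]_(n, m) :=
  \matrix_(i, j) (i \in c j)%:R.

(* Main.v *)
Require Import Defs.
From HB Require Import structures.
From mathcomp Require Import all_boot all_order all_algebra.
Import GRing.Theory Num.Theory.
Local Open Scope ring_scope.

Lemma cardE_sum (T : finType) (P : pred T) : #|P| = (\sum_x (P x : nat))%N.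
Proof.
rewrite -sum1_card big_mkcond /=; apply: eq_bigr => i _.
by rewrite unfold_in; case: (P i).
Qed.

Lemma sum_bool_card (R : numFieldType) (T : finType) (P : pred T) :
  \sum_x ((P x)%:R : R) = #|P|%:R.
Proof.
by rewrite cardE_sum natr_sum.
Qed.

Theorem lemma4 (R : numFieldType) (n m w : nat) (e : rel 'I_n)
  (c : 'I_m -> {set 'I_n}) :
  (2 <= w)%N ->
  simple_graph e ->
  clique_regular e w ->
  injective c ->
  (forall S : {set 'I_n}, omega_clique e w S <-> exists j, c j = S) ->
  (incidence_mx R c)^T *m incidence_mx R c
    = clique_graph_adj_mx R c + (w%:R)%:M
  /\ incidence_mx R c *m (incidence_mx R c)^T
    = adj_mx R e + (w%:R - 1)^-1 *: deg_mx R e.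
Proof.
move=> w2 [esym eirr] [_ creg] cinj hS.
have Hc j : omega_clique e w (c j) by apply/hS; exists j.
have Hcard j : #|c j| = w by case/andP: (Hc j) => _ /eqP.
have Hcl j x y : x \in c j -> y \in c j -> x != y -> e x y.
  move=> hx hy hxy; case/andP: (Hc j) => /forallP /(_ x) /implyP /(_ hx).
  by move=> /forallP /(_ y) /implyP /(_ hy) /implyP /(_ hxy).
have Huniq j k x y : x \in c j -> y \in c j -> x \in c k -> y \in c k ->
    x != y -> j = k.
  move=> hxj hyj hxk hyk hxy.
  have exy := Hcl j x y hxj hyj hxy.
  have /eqP := creg x y exy.
  rewrite eqn_leq => /andP [/card_le1_eqP H _].
  apply: cinj; apply: H; rewrite inE ?Hc ?hxj ?hyj ?hxk ?hyk //.
pose N i k := #|[pred j | (i \in c j) && (k \in c j)]|.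
have Npair i k : i != k -> N i k = e i k.
  move=> ik; case eik: (e i k).
    have /eqP := creg i k eik.
    rewrite eqn_leq => /andP [_]; rewrite card_gt0 => /set0Pn [S].
    rewrite inE => /andP [/andP [/hS [j <-] hij] hkj].
    apply/eqP; rewrite eqn_leq; apply/andP; split.
      apply/card_le1_eqP => a b; rewrite !inE => /andP [ha1 ha2] /andP [hb1 hb2].
      exact: Huniq ik.
    by apply/card_gt0P; exists j; rewrite inE hij hkj.
  apply/eqP; rewrite eqn0Ngt.
  apply/negP => /card_gt0P [j]; rewrite !inE => /andP [hi hk].
  by rewrite (Hcl j i k hi hk ik) in eik.
have Ndeg i : degree e i = ((w - 1) * N i i)%N.
  rewrite /degree.
  have -> : #|[set y | e i y]| = #|[pred y | e i y]| by apply: eq_card => y; rewrite inE.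
  rewrite cardE_sum.
  transitivity (\sum_y \sum_j (((y != i) && (i \in c j) && (y \in c j)) : nat))%N.
    apply: eq_bigr => y _.
    rewrite -big_mkcond /=.
    have -> : (\sum_(j | (y != i) && (i \in c j) && (y \in c j)) 1)%N
           = #|[pred j | (y != i) && (i \in c j) && (y \in c j)]| by rewrite -sum1_card.
    case: (eqVneq y i) => [->|yi]; first by rewrite eirr /= -(@card0 'I_m); apply: eq_card => j; rewrite !inE.
    rewrite -(Npair i y); last by rewrite eq_sym.
    by apply: eq_card => j; rewrite !inE.
  rewrite exchange_big /= /N cardE_sum big_distrr /=; apply: eq_bigr => j _.
  rewrite andbb; case hij: (i \in c j); last by rewrite muln0; apply: big1 => y _; rewrite andbF.
  rewrite muln1 -(Hcard j) (cardD1 i) hij add1n subSS subn0 -sum1_card [RHS]big_mkcond /=.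
  by apply: eq_bigr => y _; rewrite !inE andbT; case: (y != i); case: (y \in c j).
split.
  apply/matrixP => j k; rewrite !mxE.
  under eq_bigr => i _ do rewrite !mxE -natrM mulnb -(in_setI i (c j) (c k)).
  rewrite sum_bool_card.
  case: (eqVneq j k) => [<-|jk] /=.
    by rewrite setIid Hcard add0r mulr1n.
  rewrite mulr0n addr0; congr (_%:R).
  have le1 : (#|c j :&: c k| <= 1)%N.
    apply/card_le1_eqP => x y; rewrite !inE => /andP [xj xk] /andP [yj yk].
    case: (eqVneq x y) => // xy; by move: jk; rewrite (Huniq j k x y xj yj xk yk xy) eqxx.
  case: (eqVneq (c j :&: c k) set0) => [->|ne]; first by rewrite cards0.
  apply/eqP; rewrite eqn_leq le1 /=.
  by rewrite card_gt0.
apply/matrixP => i k; rewrite !mxE.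
under eq_bigr do rewrite !mxE -natrM mulnb.
rewrite sum_bool_card.
case: (eqVneq i k) => [<-|ik] /=.
  have w1 : (1 <= w)%N by apply: leq_trans w2.
  rewrite eirr add0r mulr1n Ndeg natrM natrB // mulrA mulVf ?mul1r //.
  by rewrite subr_eq0 pnatr_eq1 neq_ltn w2 orbT.
rewrite mulr0n mulr0 addr0; congr (_%:R).
by rewrite -(Npair i k ik).
Qed.
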